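(* Let $G=(V,E,(p_{uv})_{(u,v)\in E})$ be an influence graph. For every $S\subseteq V$, $\sigma^2(S)\le 2\,\sigma(S)$.
   Context: $G$ is a directed graph with activation probabilities $p_{uv}\in[0,1]$. $\mathbf L$ and $\hat{\mathbf L}$ are independent random subsets of $E$, each containing every edge $(u,v)$ independently with probability $p_{uv}$ (live-edge graphs). For $L\subseteq E$ and $S\subseteq V$, $\sigma_L(S)$ is the number of nodes reachable by a directed path (of length $\ge0$) in $(V,L)$ from some node of $S$, and $\sigma(S):=\mathbb{E}[\sigma_{\mathbf L}(S)]$. For $S\subseteq V$, the 2-level live-edge graph is $\mathbf L^2(S):=\mathbf L\cup(\hat{\mathbf L}\cap\{(u,v)\in E:u\in S\})$, and $\sigma^2(S):=\mathbb{E}_{\mathbf L,\hat{\mathbf L}}[\sigma_{\mathbf L^2(S)}(S)]$. *)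

(* Defs.v *)
From HB Require Import structures.
From mathcomp Require Import all_boot all_order all_algebra.
Set Implicit Arguments. Unset Strict Implicit. Unset Printing Implicit Defensive.
Import Order.TTheory GRing.Theory Num.Theory.
Local Open Scope ring_scope.

Section Influence.
Variables (R : realFieldType) (V : finType).

Definition live_rel (L : {set V * V}) : rel V := fun u v => (u, v) \in L.

Definition sigmaL (L : {set V * V}) (S : {set V}) : nat :=
  #|[set v | [exists u in S, connect (live_rel L) u v]]|.

Definition live_prob (E : {set V * V}) (p : V * V -> R) (L : {set V * V}) : R :=
  \prod_(e in E) (if e \in L then p e else 1 - p e).

Definition sigma (E : {set V * V}) (p : V * V -> R) (S : {set V}) : R :=
  \sum_(L : {set V * V} | L \subset E) live_prob E p L * (sigmaL L S)%:R.

Definition L2 (E L Lh : {set V * V}) (S : {set V}) : {set V * V} :=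
  L :|: (Lh :&: [set e in E | e.1 \in S]).

Definition sigma2 (E : {set V * V}) (p : V * V -> R) (S : {set V}) : R :=
  \sum_(L : {set V * V} | L \subset E)
    \sum_(Lh : {set V * V} | Lh \subset E)
      live_prob E p L * live_prob E p Lh * (sigmaL (L2 E L Lh S) S)%:R.

End Influence.

(* Main.v *)
Require Import Defs.
From HB Require Import structures.
From mathcomp Require Import all_boot all_order all_algebra.
Import Order.TTheory GRing.Theory Num.Theory.
Local Open Scope ring_scope.

Section Aux.
Variables (R : realFieldType) (V : finType).
Implicit Types (E L Lh : {set V * V}) (S : {set V}) (p : V * V -> R).

Lemma live_prob_sum (E : {set V * V}) (p : V * V -> R) :
  \sum_(L : {set V * V} | L \subset E) live_prob E p L = 1.
Proof.
pose F' := fun e => if e \in E then p e else 0.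
pose G' := fun e => if e \in E then 1 - p e else 1.
have h1 : \prod_(e : V * V) (F' e + G' e) = 1.
  by apply: big1 => e _; rewrite /F' /G'; case: (e \in E); [rewrite addrC subrK | rewrite add0r].
have h2 : \sum_(J : {set V * V}) \prod_(i : V * V) (if i \in J then F' i else G' i) = 1.
  rewrite bigA_distr in h1; rewrite -[RHS]h1; by apply: eq_bigl => J.
rewrite -h2 [RHS](bigID (fun L : {set V * V} => L \subset E)) /= [X in _ + X]big1 ?addr0.
  apply: eq_bigr => L sLE.
  rewrite /live_prob big_mkcond /=; apply: eq_bigr => e _.
  rewrite /F' /G'; case: (boolP (e \in E)) => eE //.
  have -> : (e \in L) = false by apply/negbTE; apply: contra eE; apply: (subsetP sLE).
  by [].
by move=> L /subsetPn [e eL eE]; rewrite (bigD1 e) //= eL /F' (negbTE eE) mul0r.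
Qed.

Definition swp (E : {set V * V}) (S : {set V}) (L Lh : {set V * V}) :=
  (Lh :&: [set e in E | e.1 \in S]) :|: (L :\: [set e in E | e.1 \in S]).

Lemma swp_prob E p S L Lh :
  live_prob E p (swp E S L Lh) * live_prob E p (swp E S Lh L)
  = live_prob E p L * live_prob E p Lh :> R.
Proof.
rewrite /live_prob -!big_split /=; apply: eq_bigr => e eE.
rewrite /swp !inE eE /=; case: (e.1 \in S); rewrite /= ?andbT ?andbF ?orbF //=.
exact: mulrC.
Qed.

Lemma swpK E S L Lh : swp E S (swp E S L Lh) (swp E S Lh L) = L.
Proof.
apply/setP => e; rewrite /swp !inE.
by case: (e \in L); case: (e \in Lh); case: (e \in E); case: (e.1 \in S).
Qed.

Lemma swp_sub E S L Lh : L \subset E -> Lh \subset E -> swp E S L Lh \subset E.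
Proof.
move=> /subsetP hL /subsetP hLh; apply/subsetP => e; rewrite /swp !inE.
case/orP => [/andP[/hLh //] | /andP[_ /hL //]].
Qed.

Lemma connect_mono (A B : {set V * V}) x y : A \subset B ->
  connect (live_rel A) x y -> connect (live_rel B) x y.
Proof.
move=> /subsetP sAB; apply: connect_sub => u v h; apply: connect1.
exact: sAB.
Qed.
Arguments connect_mono {A B x y}.

Lemma reach_split E L Lh S :
  (sigmaL (L2 E L Lh S) S <= sigmaL L S + sigmaL (swp E S L Lh) S)%N.
Proof.
set F := [set e in E | e.1 \in S].
set N := L :\: F.
set M := swp E S L Lh.
have NL : N \subset L by apply: subsetDl.
have NM : N \subset M by rewrite /M /swp subsetUr.
have key : forall x y, connect (live_rel (L2 E L Lh S)) x y ->
   connect (live_rel N) x y \/ exists2 s, s \in S &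
     (connect (live_rel L) s y || connect (live_rel M) s y).
  move=> x y /connectP [q pq ->] {y}.
  elim: q x pq => [|z q IH] x /=; first by left; exact: connect0.
  case/andP => exz pzq.
  case: (IH z pzq) => [cN|]; last by right.
  have [xF|xF] := boolP ((x, z) \in F).
    have xS : x \in S by move: xF; rewrite inE => /andP[].
    right; exists x => //.
    move: exz; rewrite /live_rel /L2 inE => /orP [xL|xLh].
      apply/orP; left; apply: (@connect_trans _ (live_rel L) z x); last exact: (connect_mono NL cN).
      exact: connect1.
    apply/orP; right; apply: (@connect_trans _ (live_rel M) z x); last exact: (connect_mono NM cN).
    by apply: connect1; rewrite /live_rel /M /swp inE; apply/orP; left.
  left; apply: (@connect_trans _ (live_rel N) z x) cN; apply: connect1.
  move: exz; rewrite /live_rel /L2 /N !inE => /orP [xL|/andP[_ xF']].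
    by rewrite xL andbT; move: xF; rewrite /F inE.
  by move: xF; rewrite /F inE xF'.
rewrite /sigmaL; apply: leq_trans (leq_card_setU _ _).
apply: subset_leq_card; apply/subsetP => v; rewrite !inE => /existsP [u /andP [uS cuv]].
case: (key u v cuv) => [cN|[s sS /orP [c|c]]].
- by apply/orP; left; apply/existsP; exists u; rewrite uS (connect_mono NL cN).
- by apply/orP; left; apply/existsP; exists s; rewrite sS c.
- by apply/orP; right; apply/existsP; exists s; rewrite sS c.
Qed.

End Aux.
Arguments swp {V}.
Arguments swpK {V}.
Arguments swp_sub {V}.
Arguments swp_prob {R V}.
Arguments reach_split {V}.
Arguments live_prob_sum {R V}.

Theorem lemma7 (R : realFieldType) (V : finType) (E : {set V * V})
  (p : V * V -> R) (hp : forall e, e \in E -> 0 <= p e <= 1) (S : {set V}) :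
  sigma2 E p S <= 2 * sigma E p S.
Proof.
have Pge0 : forall L, 0 <= live_prob E p L.
  move=> L; apply: prodr_ge0 => e eE; have /andP[h0 h1] := hp e eE.
  by case: (e \in L); rewrite ?subr_ge0.
set T := \sum_(L : {set V * V} | L \subset E) \sum_(Lh : {set V * V} | Lh \subset E)
   live_prob E p L * live_prob E p Lh * (sigmaL L S)%:R.
have T1 : T = sigma E p S.
  rewrite /T /sigma; apply: eq_bigr => L _.
  transitivity (live_prob E p L * (sigmaL L S)%:R *
    \sum_(Lh : {set V * V} | Lh \subset E) live_prob E p Lh); last first.
    by rewrite live_prob_sum mulr1.
  by rewrite big_distrr /=; apply: eq_bigr => Lh _; rewrite mulrAC.
have T2 : \sum_(L : {set V * V} | L \subset E) \sum_(Lh : {set V * V} | Lh \subset E)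
   live_prob E p L * live_prob E p Lh * (sigmaL (swp E S L Lh) S)%:R = T.
  rewrite /T !pair_big_dep.
  have hinj : injective (fun q : {set V * V} * {set V * V} =>
      (swp E S q.1 q.2, swp E S q.2 q.1)).
    apply: (can_inj (g := fun q : {set V * V} * {set V * V} =>
      (swp E S q.1 q.2, swp E S q.2 q.1))).
    by move=> [L Lh] /=; rewrite !swpK.
  rewrite [LHS](reindex_inj hinj) /=.
  apply: eq_big => [[L Lh]|[L Lh] _] /=; last by rewrite swp_prob swpK.
  apply/idP/idP => /andP [h1 h2].
    by apply/andP; split; [rewrite -(swpK E S L Lh) | rewrite -(swpK E S Lh L)]; apply: swp_sub.
  by rewrite !swp_sub.
apply: le_trans (_ : _ <= \sum_(L : {set V * V} | L \subset E)
   \sum_(Lh : {set V * V} | Lh \subset E)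
   (live_prob E p L * live_prob E p Lh * (sigmaL L S)%:R +
    live_prob E p L * live_prob E p Lh * (sigmaL (swp E S L Lh) S)%:R)) _.
  rewrite /sigma2; apply: ler_sum => L _; apply: ler_sum => Lh _.
  rewrite -mulrDr; apply: ler_wpM2l; first by apply: mulr_ge0.
  by rewrite -natrD ler_nat reach_split.
under eq_bigr => L _ do rewrite big_split.
by rewrite big_split /= T2 -T1 mulr_natl mulr2n.
Qed.
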